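(* Let $X$ be a finite graded poset and let $f\colon X\to\mathbb R$ be a Morse function satisfying the Exclusion condition. Then there exists an order preserving Morse function $f'\colon X\to\mathbb R$ (i.e. $x\le y\Rightarrow f'(x)\le f'(y)$) satisfying the Exclusion condition and having the same associated Morse matching as $f$, i.e. $\mathcal M_{f'}=\mathcal M_f$.
   Context: In a poset, write $a\prec b$ if $a<b$ and there is no $c$ with $a<c<b$. A chain $x_0<\dots<x_n$ has length $n$; a poset is homogeneous of degree $n$ if all its maximal chains have length $n$; $X$ is graded if $U_x=\{y:y\le x\}$ is homogeneous for every $x$. A Morse function on a finite poset $X$ is a map $f\colon X\to\mathbb R$ such that for every $x$, $\#\{y: x\prec y,\ f(x)\ge f(y)\}\le1$ and $\#\{w: w\prec x,\ f(w)\ge f(x)\}\le 1$; $x$ is critical if both sets are empty, regular otherwise. $f$ satisfies the Exclusion condition if for every regular $x$ exactly one of these two sets is nonempty. The associated matching is $\mathcal M_f=\{(w,x): w\prec x,\ f(w)\ge f(x)\}$. *)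

(* Defs.v *)
From mathcomp Require Import all_boot.
From Stdlib Require Import Reals.
Set Implicit Arguments. Unset Strict Implicit. Unset Printing Implicit Defensive.

Definition is_poset (T : finType) (le : rel T) : Prop :=
  [/\ reflexive le, antisymmetric le & transitive le].

Section Poset.
Variables (T : finType) (le : rel T).

Definition lt_ (x y : T) : bool := (x != y) && le x y.

Definition covers (a b : T) : bool :=
  lt_ a b && [forall c, ~~ (lt_ a c && lt_ c b)].

Definition is_chain_in (A : pred T) (s : seq T) : Prop :=
  sorted lt_ s /\ all A s.

Definition is_maximal_chain_in (A : pred T) (s : seq T) : Prop :=
  is_chain_in A s /\ s <> [::] /\
  forall t, is_chain_in A t -> {subset s <= t} -> {subset t <= s}.

(* length of chain x_0 < ... < x_n is n *)
Definition homogeneous_of_degree (A : pred T) (n : nat) : Prop :=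
  forall s, is_maximal_chain_in A s -> (size s).-1 = n.

Definition down_set (x : T) : pred T := fun y => le y x.

Definition graded : Prop :=
  forall x, exists n, homogeneous_of_degree (down_set x) n.

Variable f : T -> R.

Definition Rle_b (a b : R) : bool := if Rle_dec a b then true else false.

Definition up_bad (x : T) : pred T := fun y => covers x y && Rle_b (f y) (f x).
Definition down_bad (x : T) : pred T := fun w => covers w x && Rle_b (f x) (f w).

Definition morse : Prop :=
  forall x, #|up_bad x| <= 1 /\ #|down_bad x| <= 1.

Definition critical (x : T) : Prop := #|up_bad x| = 0 /\ #|down_bad x| = 0.

Definition exclusion : Prop :=
  forall x, ~ critical x -> ((0 < #|up_bad x|) <> (0 < #|down_bad x|)).

Definition matching (w x : T) : bool := covers w x && Rle_b (f x) (f w).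

End Poset.

Definition order_preserving (T : finType) (le : rel T) (f : T -> R) : Prop :=
  forall x y, le x y -> (f x <= f y)%R.

(* Main.v *)
Require Import Defs.
From mathcomp Require Import all_boot.
From Stdlib Require Import Reals.
From Stdlib Require Import Lra Classical ClassicalEpsilon.
From mathcomp Require Import zify.
Set Implicit Arguments. Unset Strict Implicit.

Section PosetFacts.
Variables (T : finType) (le : rel T).
Hypothesis Hpo : is_poset le.

Lemma le_refl' x : le x x. Proof. by case: Hpo. Qed.
Lemma le_anti' x y : le x y -> le y x -> x = y.
Proof. case: Hpo => _ H _ a b; apply: H; exact/andP. Qed.
Lemma le_trans' x y z : le x y -> le y z -> le x z.
Proof. case: Hpo => _ _ H a b; exact: H a b. Qed.

Lemma lt_trans' : transitive (lt_ le).
Proof.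
move=> y x z /andP[nxy lxy] /andP[nyz lyz]; apply/andP; split; last exact: le_trans' lxy lyz.
apply/eqP=> exz; subst z; move/eqP: nxy; apply; exact: le_anti' lxy lyz.
Qed.

Lemma lt_irr' : irreflexive (lt_ le).
Proof. by move=> x; rewrite /lt_ eqxx. Qed.

Lemma chain_cmp s x y : sorted (lt_ le) s -> x \in s -> y \in s -> x != y ->
  lt_ le x y || lt_ le y x.
Proof.
rewrite (sorted_pairwise lt_trans'); elim: s => // z s IH.
rewrite pairwise_cons => /andP[Hz Hs]; rewrite !in_cons.
case/orP=> [/eqP->|xs]; case/orP=> [/eqP->|ys].
- by rewrite eqxx.
- by move=> _; rewrite (allP Hz).
- by move=> _; rewrite (allP Hz) ?orbT.
- exact: IH.
Qed.

Lemma szb u : sorted (lt_ le) u -> size u <= #|T|.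
Proof. move=> /(sorted_uniq lt_trans' lt_irr') /card_uniqP <-; exact: max_card. Qed.

Lemma ext_step (A : pred T) s : is_chain_in le A s ->
  (forall t, is_chain_in le A t -> {subset s <= t} -> {subset t <= s}) \/
  exists t, is_chain_in le A t /\ {subset s <= t} /\ size s < size t.
Proof.
move=> Hs.
destruct (classic (forall t, is_chain_in le A t -> {subset s <= t} -> {subset t <= s})) as [H|H]; [by left|right].
apply not_all_ex_not in H; case: H => t H.
apply imply_to_and in H; case: H => Ht H; apply imply_to_and in H; case: H => Hst H.
apply not_all_ex_not in H; case: H => y H; apply imply_to_and in H; case: H => yt ys.
exists t; split=> //; split=> //.
apply: (@uniq_leq_size _ (y :: s)).
  rewrite /= (sorted_uniq lt_trans' lt_irr' (proj1 Hs)); by case: (y \in s) ys.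
by move=> z; rewrite in_cons => /orP[/eqP->|/Hst].
Qed.

Lemma extend_max (A : pred T) s : is_chain_in le A s -> s <> [::] ->
  exists t, is_maximal_chain_in le A t /\ {subset s <= t}.
Proof.
move: {2}(#|T| - size s) (leqnn (#|T| - size s)) => n.
elim: n s => [|n IH] s Hn Hs Hne; case: (ext_step Hs) => [H|[t [Ht [Hst Hlt]]]];
  try by exists s; split=> //; split=> //; split.
- have := szb (proj1 Ht); lia.
- have [|||u [Hu Htu]] := IH t; [have := szb (proj1 Ht); lia| done | by case: (t) Hlt | ].
  by exists u; split=> // z /Hst /Htu.
Qed.

Variable deg : T -> nat.
Hypothesis Hdeg : forall x, homogeneous_of_degree le (down_set le x) (deg x).

Lemma deg_cover a b : covers le a b -> deg b = (deg a).+1.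
Proof.
move=> /andP[/andP[nab lab] /forallP Hc].
have [|//|s [[[Ss As] [Sne Smax]] Has]] := @extend_max (down_set le a) [:: a].
  by split=> //=; rewrite andbT /down_set le_refl'.
have a_s : a \in s by apply: Has; rewrite inE.
have sle : forall y, y \in s -> le y a by move=> y ys; exact: (allP As).
have nb : forall y, y \in s -> y != b.
  move=> y /sle ya; apply/eqP=> eyb; subst y; by rewrite (le_anti' lab ya) eqxx in nab.
have Hm : is_maximal_chain_in le (down_set le b) (rcons s b).
  split; [split|split; first by case: (s)].
  - rewrite (sorted_pairwise lt_trans') pairwise_rcons -(sorted_pairwise lt_trans') Ss andbT.
    apply/allP=> y ys; rewrite /lt_ nb //=; exact: le_trans' (sle _ ys) lab.
  - rewrite all_rcons /down_set le_refl' /=; apply/allP=> y ys; exact: le_trans' (sle _ ys) lab.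
  move=> t [St At] Hsub y yt; rewrite mem_rcons in_cons.
  case: (eqVneq y b) => //= ynb.
  have Hta : forall z, z \in t -> z != b -> le z a.
    move=> z zt znb; case: (eqVneq z a) => [->|zna]; first exact: le_refl'.
    have a_t : a \in t by apply: Hsub; rewrite mem_rcons in_cons a_s orbT.
    have := chain_cmp St zt a_t zna.
    case/orP=> [/andP[] //|Haz]; exfalso.
    have := Hc z; rewrite Haz /= /lt_ znb /=; move: (allP At z zt); rewrite /down_set => -> //.
  apply: (Smax [seq z <- t | z != b]).
  + split; first exact: sorted_filter lt_trans' _ _ St.
    apply/allP=> z; rewrite mem_filter => /andP[znb zt]; exact: Hta.
  + move=> z zs; rewrite mem_filter nb //=; apply: Hsub; by rewrite mem_rcons in_cons zs orbT.
  + by rewrite mem_filter ynb.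
have := Hdeg Hm; have := Hdeg (conj (conj Ss As) (conj Sne Smax)).
rewrite size_rcons /= => <- <-; case: (s) Sne => //.
Qed.

End PosetFacts.

Section MorseFacts.
Variables (T : finType) (le : rel T) (f : T -> R).
Hypothesis Hpo : is_poset le.
Hypothesis Hmo : morse le f.
Hypothesis Hex : exclusion le f.

Lemma match_uniq w w' x : matching le f w x -> matching le f w' x -> w = w'.
Proof.
move=> H1 H2; have [_ /card_le1_eqP Hc] := Hmo x; exact: Hc.
Qed.

Lemma match_excl w x y : matching le f w x -> matching le f x y -> False.
Proof.
move=> H1 H2; have Hd : 0 < #|down_bad le f x| by apply/card_gt0P; exists w.
have Hu : 0 < #|up_bad le f x| by apply/card_gt0P; exists y.
apply: (Hex (x:=x)); last by rewrite Hd Hu.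
by case=> _; move: Hd; rewrite lt0n => /eqP.
Qed.

End MorseFacts.

Section Construction.
Variables (T : finType) (le : rel T) (f : T -> R).
Hypothesis Hpo : is_poset le.
Hypothesis Hmo : morse le f.
Hypothesis Hex : exclusion le f.
Variable r : T -> nat.
Hypothesis Hr : forall a b, covers le a b -> r b = (r a).+1.

Definition Ssum := foldr (fun t acc => Rabs (f t) + acc)%R 0%R (enum T).

Lemma foldr_ge0 (l : seq T) : (0 <= foldr (fun t acc => Rabs (f t) + acc) 0 l)%R.
Proof. elim: l => [|a l IH] /=; [lra | have := Rabs_pos (f a); lra]. Qed.

Lemma foldr_bound (l : seq T) u : u \in l ->
  (Rabs (f u) <= foldr (fun t acc => Rabs (f t) + acc) 0 l)%R.
Proof.
elim: l => // a l IH; rewrite in_cons => /orP[/eqP->|/IH H] /=.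
  have := foldr_ge0 l; lra.
have := Rabs_pos (f a); lra.
Qed.

Definition Kc := (2 * Ssum + 1)%R.

Lemma S_bound u : (Rabs (f u) <= Ssum)%R.
Proof. apply: foldr_bound; by rewrite mem_enum. Qed.

Lemma K_bound u v : (f u - f v < Kc)%R.
Proof.
have Hu := S_bound u; have Hv := S_bound v.
have := Rle_abs (f u); have := Rle_abs (- f v); rewrite Rabs_Ropp /Kc; lra.
Qed.

Lemma K_pos : (0 < Kc)%R.
Proof. have : (0 <= Ssum)%R by exact: foldr_ge0. rewrite /Kc; lra. Qed.

Definition lo y := if [pick w | matching le f w y] is Some w then w else y.
Definition paired y := [exists x, matching le f y x] || [exists w, matching le f w y].
Definition lev y := (2 * r (lo y) + paired y)%N.
Definition fp y := (Kc * INR (lev y) + f (lo y))%R.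

Lemma lo_cases y : (exists w, matching le f w y /\ lo y = w) \/
  (lo y = y /\ forall w, matching le f w y = false).
Proof.
rewrite /lo; case: pickP => [w Hw|Hn]; [left; by exists w | right; split=> // w; exact: Hn].
Qed.

Lemma fp_lt a b : (lev a < lev b)%N \/ ((lev a <= lev b)%N /\ (f (lo a) < f (lo b))%R) ->
  (fp a < fp b)%R.
Proof.
rewrite /fp => [[H|[H1 H2]]].
  have H1 : (INR (lev a) + 1 <= INR (lev b))%R by rewrite -S_INR; apply le_INR; apply/leP.
  have := Rmult_le_compat_l _ _ _ (Rlt_le _ _ K_pos) H1.
  have := K_bound (lo a) (lo b); lra.
have H3 : (INR (lev a) <= INR (lev b))%R by apply le_INR; apply/leP.
have := Rmult_le_compat_l _ _ _ (Rlt_le _ _ K_pos) H3; lra.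
Qed.

Lemma Rle_b_true x y : Rle_b x y = true <-> (x <= y)%R.
Proof. rewrite /Rle_b; case: Rle_dec => //; split=> //. Qed.

Lemma cover_strict a b : covers le a b -> matching le f a b = false -> (fp a < fp b)%R.
Proof.
move=> Hc; rewrite /matching Hc /= => Hm.
have fab : (f a < f b)%R.
  apply: Rnot_le_lt => H; move/Rle_b_true: H; by rewrite Hm.
have rab := Hr Hc.
have pa : (paired a <= 1)%N by case: (paired a).
apply: fp_lt; rewrite /lev.
case: (lo_cases a) => [[v [mva ->]] | [-> nma]];
  case: (lo_cases b) => [[w [mwb ->]]|[-> nmb]].
- have := Hr (proj1 (andP mva)); have := Hr (proj1 (andP mwb)); left; lia.
- have := Hr (proj1 (andP mva)); left; lia.
- have := Hr (proj1 (andP mwb)) => rwb.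
  have pb : paired b by apply/orP; right; apply/existsP; exists w.
  right; split; first by rewrite pb; lia.
  move/andP: mwb => [_ /Rle_b_true]; lra.
- left; lia.
Qed.

Lemma match_equal w x : matching le f w x -> fp w = fp x.
Proof.
move=> Hwx.
have lox : lo x = w.
  case: (lo_cases x) => [[w' [H ->]] | [_ H]]; last by rewrite H in Hwx.
  exact: (match_uniq Hmo H Hwx).
have low : lo w = w.
  case: (lo_cases w) => [[v [H _]] | [-> _]] //; exfalso; exact: (match_excl Hex H Hwx).
have pw : paired w by apply/orP; left; apply/existsP; exists x.
have px : paired x by apply/orP; right; apply/existsP; exists w.
by rewrite /fp /lev lox low pw px.
Qed.

Lemma match_eq w x : matching le fp w x = matching le f w x.
Proof.
case Hc: (covers le w x); last by rewrite /matching Hc.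
case Hm: (matching le f w x).
  have := match_equal Hm; rewrite /matching Hc /= => ->; apply/Rle_b_true; lra.
have := cover_strict Hc Hm; rewrite /matching Hc /=.
rewrite /Rle_b; case: Rle_dec => // H1 H2; exfalso; lra.
Qed.

Lemma fp_cover a b : covers le a b -> (fp a <= fp b)%R.
Proof.
move=> Hc; case Hm: (matching le f a b).
  by rewrite (match_equal Hm); lra.
by have := cover_strict Hc Hm; lra.
Qed.

Lemma fp_mono : order_preserving le fp.
Proof.
move=> x y.
move: {2}#|[pred z | lt_ le x z && le z y]| (leqnn #|[pred z | lt_ le x z && le z y]|) => n.
elim: n x y => [|n IH] x y Hn Hxy; case: (eqVneq x y) => [->|nxy]; try lra.
  have : (0 < #|[pred z | lt_ le x z && le z y]|)%N.
    by apply/card_gt0P; exists y; rewrite inE /lt_ nxy Hxy (le_refl' Hpo).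
  lia.
case Hc: (covers le x y); first exact: fp_cover.
move: Hc; rewrite /covers /lt_ nxy Hxy /= => /negbT /forallPn [c].
rewrite negbK => /andP[Hxc Hcy].
have Hcy' := proj2 (andP Hcy); have Hxc' := proj2 (andP Hxc).
apply: (@Rle_trans _ (fp c)); apply: IH => //.
- have : (#|[pred z | lt_ le x z && le z c]| < #|[pred z | lt_ le x z && le z y]|)%N.
    apply: proper_card; apply/properP; split.
      apply/subsetP=> z; rewrite !inE => /andP[-> zc]; exact: (le_trans' Hpo zc Hcy').
    exists y; first by rewrite inE /lt_ nxy Hxy (le_refl' Hpo).
    rewrite inE negb_and; apply/orP; right; apply/negP => Hyc.
    by move: Hcy; rewrite /lt_ (le_anti' Hpo Hyc Hcy') eqxx.
  lia.
- have : (#|[pred z | lt_ le c z && le z y]| < #|[pred z | lt_ le x z && le z y]|)%N.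
    apply: proper_card; apply/properP; split.
      apply/subsetP=> z; rewrite !inE => /andP[cz ->]; rewrite andbT.
      exact: (lt_trans' Hpo Hxc cz).
    exists c; first by rewrite inE /lt_ Hxc Hcy'.
    by rewrite inE /lt_ eqxx.
  lia.
Qed.

End Construction.

Unset Implicit Arguments. Set Strict Implicit.

Theorem mainTheorem7 (T : finType) (le : rel T) (f : T -> R) :
  is_poset le -> graded le -> morse le f -> exclusion le f ->
  exists f' : T -> R,
    order_preserving le f' /\ morse le f' /\ exclusion le f' /\
    (forall w x, matching le f' w x = matching le f w x).
Proof.
move=> Hpo Hgr Hmo Hex.
pose deg x := proj1_sig (constructive_indefinite_description _ (Hgr x)).
have Hdeg : forall x, homogeneous_of_degree le (down_set le x) (deg x).
  by move=> x; rewrite /deg; case: constructive_indefinite_description.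
have Hr := deg_cover Hpo Hdeg.
pose g := @fp T le f deg.
have Hm : forall w x, matching le g w x = matching le f w x := match_eq Hmo Hex Hr.
have Hu : forall x, #|up_bad le g x| = #|up_bad le f x|.
  by move=> x; apply: eq_card => y; exact: Hm.
have Hd : forall x, #|down_bad le g x| = #|down_bad le f x|.
  by move=> x; apply: eq_card => y; exact: Hm.
exists g; split; first exact: (fp_mono Hpo Hmo Hex Hr).
split; first by move=> x; rewrite Hu Hd; exact: Hmo.
split=> //.
move=> x; rewrite /critical Hu Hd; exact: Hex.
Qed.
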